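(* Let $h \geq 1$ and $N \geq 1$ be integers. For all integers $d_1, \dots, d_N \in [0,h]$, the polygon $P(d_1, \dots, d_N)$ belongs to $\mathcal{P}_N$. Conversely, for every $P \in \mathcal{P}_N$ there exists a collection of integers $d_1, \dots, d_N \in [0,h]$, unique up to permutation, such that $P = P(d_1, \dots, d_N)$.
   Context: For integers $d_1, \dots, d_N$ between $0$ and $h$, the polygon $P(d_1,\dots,d_N)$ is the function on $[0,h]$ given by $P(d_1, \dots, d_N)(x) = \frac{1}{N} \sum_{i=1}^N \max(0, x + d_i - h)$. $\mathcal{P}_N$ denotes the set of convex polygons on $[0,h]$ starting at the origin (continuous convex piecewise linear functions $P$ on $[0,h]$ with $P(0)=0$) whose breakpoints have integral $x$-coordinates and whose slopes lie in $\frac{1}{N}\mathbb{Z} \cap [0,1]$. *)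

(* Defs.v *)
From HB Require Import structures.
From mathcomp Require Import all_boot all_order all_algebra.
From mathcomp Require Import reals.
Set Implicit Arguments. Unset Strict Implicit. Unset Printing Implicit Defensive.
Import Order.TTheory GRing.Theory Num.Theory.
Local Open Scope ring_scope.

Definition polygon (R : realType) (h N : nat) (d : seq nat) (x : R) : R :=
  (N%:R)^-1 * \sum_(di <- d) Num.max 0 (x + di%:R - h%:R).

Definition eqOn (R : realType) (h : nat) (f g : R -> R) : Prop :=
  forall x : R, 0 <= x <= h%:R -> f x = g x.

(* The class P_N: convex, P(0)=0, piecewise linear on [0,h] with breakpoints
   at integers (i.e. affine on each [k,k+1], which also gives continuity),
   with slopes in (1/N)Z \cap [0,1]. *)
Definition inPN (R : realType) (h N : nat) (f : R -> R) : Prop :=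
  f 0 = 0 /\
  (forall x y t : R, 0 <= x <= h%:R -> 0 <= y <= h%:R -> 0 <= t <= 1 ->
      f (t * x + (1 - t) * y) <= t * f x + (1 - t) * f y) /\
  exists s : nat -> R, forall k : nat, (k < h)%N ->
     (exists z : int, s k = z%:~R / N%:R) /\ 0 <= s k <= 1 /\
     (forall x : R, k%:R <= x <= k.+1%:R -> f x = f k%:R + s k * (x - k%:R)).

(* Main.v *)
Require Import Defs.
From HB Require Import structures.
From mathcomp Require Import all_boot all_order all_algebra.
From mathcomp Require Import reals.
From mathcomp Require Import archimedean ring lra zify.
Import Order.TTheory GRing.Theory Num.Theory.
Lemma countT_iota (p : pred nat) a n : (forall i, a <= i < a + n -> p i) -> count p (iota a n) = n.
Proof.
move=> H; rewrite -[RHS](size_iota a n) -count_predT; apply: eq_in_count => i.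
by rewrite mem_iota => /H ->.
Qed.

Lemma countF_iota (p : pred nat) a n : (forall i, a <= i < a + n -> ~~ p i) -> count p (iota a n) = 0.
Proof.
move=> H; rewrite -[RHS](count_pred0 (iota a n)); apply: eq_in_count => i.
by rewrite mem_iota => /H /negbTE ->.
Qed.

Lemma count_le_split v (s : seq nat) :
  count (fun x => v <= x) s = count (pred1 v) s + count (fun x => v.+1 <= x) s.
Proof.
elim: s => [|a s IH] //=; rewrite IH.
by case: (ltngtP v a) => H /=; try lia; subst; rewrite eqxx ltnn; lia.
Qed.

Lemma perm_of_G (s s' : seq nat) :
  (forall t, count (fun x => t <= x) s = count (fun x => t <= x) s') -> perm_eq s s'.
Proof.
move=> H; apply/allP => v _; apply/eqP.
have := count_le_split v s; have := count_le_split v s'; rewrite !H; lia.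
Qed.

Section Constr.
Variables (h N : nat) (c : nat -> nat).
Hypothesis cmono : forall k, k.+1 < h -> c k <= c k.+1.
Hypothesis cN : forall k, k < h -> c k <= N.

Lemma cmono2 k k' : k <= k' -> k' < h -> c k <= c k'.
Proof.
move=> kk'; elim: k' kk' => [|k' IH]; first by rewrite leqn0 => /eqP ->.
rewrite leq_eqVlt => /orP[/eqP -> //|hk] hkk.
have := IH hk (ltnW hkk); have := cmono _ hkk; lia.
Qed.

Definition mm j := count (fun k => c k <= j) (iota 0 h).
Definition dd := [seq h - mm j | j <- iota 0 N].

Lemma mm_le j : mm j <= h.
Proof. by rewrite /mm; apply: leq_trans (count_size _ _) _; rewrite size_iota. Qed.

Lemma mle j k : k < h -> (mm j <= k) = (j < c k).
Proof.
move=> hk; case: (ltnP j (c k)) => hj.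
  rewrite /mm -(subnKC (ltnW hk)) iotaD count_cat.
  rewrite (@countF_iota _ _ (h - k)) ?addn0.
    by apply: leq_trans (count_size _ _) _; rewrite size_iota.
  move=> i /andP[hi1 hi2]; rewrite -ltnNge; apply: (leq_trans hj).
  apply: cmono2 => //; lia.
rewrite /mm -(subnKC hk) iotaD count_cat.
rewrite (@countT_iota _ _ (k.+1)); first lia.
move=> i /andP[hi1 hi2]; apply: (leq_trans _ hj); apply: cmono2; lia.
Qed.

Lemma dd_size : size dd = N.
Proof. by rewrite size_map size_iota. Qed.

Lemma dd_all : all (fun di => di <= h) dd.
Proof. by apply/allP => x /mapP[j _ ->]; rewrite leq_subr. Qed.

Lemma dd_count k : k < h -> count (fun di => h <= di + k) dd = c k.
Proof.
move=> hk; rewrite count_map.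
have -> : count (preim (fun j => h - mm j) (fun di => h <= di + k)) (iota 0 N) =
   count (fun j => j < c k) (iota 0 N).
  apply: eq_count => j /=; rewrite -(mle j k hk); have := mm_le j; lia.
rewrite -(subnKC (cN _ hk)) iotaD count_cat.
rewrite (@countT_iota _ _ (c k)); last by move=> i; lia.
rewrite (@countF_iota _ _ (N - c k)); last by move=> i; lia.
lia.
Qed.
End Constr.
Local Open Scope ring_scope.

Section H.
Variable R : realType.
Variable h : nat.

Lemma termA (di k : nat) (x : R) : k%:R <= x <= k.+1%:R ->
  Num.max 0 (x + di%:R - h%:R) =
  Num.max 0 (k%:R + di%:R - h%:R) + (h <= di + k)%N%:R * (x - k%:R).
Proof.
move=> /andP[h1 h2]; case: leqP => hk.
  have : h%:R <= di%:R + k%:R :> R by rewrite -natrD ler_nat.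
  move=> hk'; rewrite !max_r ?mul1r; [lra|lra|lra].
have : (di + k).+1%:R <= h%:R :> R by rewrite ler_nat.
rewrite -addn1 !natrD => hk'; rewrite -addn1 natrD in h2.
rewrite !max_l ?mul0r; [lra|lra|lra].
Qed.

Lemma sumA (d : seq nat) k (x : R) : k%:R <= x <= k.+1%:R ->
  \sum_(di <- d) Num.max 0 (x + di%:R - h%:R) =
  \sum_(di <- d) Num.max 0 (k%:R + di%:R - h%:R) +
    (count (fun di => h <= di + k)%N d)%:R * (x - k%:R).
Proof.
move=> hx; elim: d => [|a d IH]; first by rewrite !big_nil mul0r addr0.
rewrite !big_cons IH (@termA a k x hx) /= natrD; ring.
Qed.

Lemma polyA (N : nat) (d : seq nat) k (x : R) : k%:R <= x <= k.+1%:R ->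
  polygon h N d x = polygon h N d k%:R +
    (count (fun di => h <= di + k)%N d)%:R / N%:R * (x - k%:R).
Proof. by move=> hx; rewrite /polygon (@sumA d k x hx); ring. Qed.

Lemma poly0 N (d : seq nat) : all (fun di => di <= h)%N d -> polygon h N d 0 = 0 :> R.
Proof.
move=> hd; rewrite /polygon big_seq big1 ?mulr0 // => di /(allP hd) hdi.
rewrite max_l // add0r subr_le0 ler_nat //.
Qed.

Lemma termC (di : nat) (x y t : R) : 0 <= t <= 1 ->
  Num.max 0 ((t * x + (1 - t) * y) + di%:R - h%:R) <=
  t * Num.max 0 (x + di%:R - h%:R) + (1 - t) * Num.max 0 (y + di%:R - h%:R).
Proof.
move=> /andP[t0 t1].
set a := Num.max 0 (x + _ - _); set b := Num.max 0 (y + _ - _).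
have a0 : 0 <= a by rewrite le_max lexx.
have a1 : x + di%:R - h%:R <= a by rewrite le_max lexx orbT.
have b0 : 0 <= b by rewrite le_max lexx.
have b1 : y + di%:R - h%:R <= b by rewrite le_max lexx orbT.
rewrite ge_max; apply/andP; split; nra.
Qed.

Lemma polyC N (d : seq nat) (x y t : R) : 0 <= t <= 1 ->
  polygon h N d (t * x + (1 - t) * y) <=
  t * polygon h N d x + (1 - t) * polygon h N d y.
Proof.
move=> ht; rewrite /polygon.
have -> : t * ((N%:R)^-1 * \sum_(di <- d) Num.max 0 (x + di%:R - h%:R)) +
   (1 - t) * ((N%:R)^-1 * \sum_(di <- d) Num.max 0 (y + di%:R - h%:R)) =
   (N%:R)^-1 * (t * \sum_(di <- d) Num.max 0 (x + di%:R - h%:R) +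
   (1 - t) * \sum_(di <- d) Num.max 0 (y + di%:R - h%:R)) by ring.
apply: ler_wpM2l; first by rewrite invr_ge0 ler0n.
elim: d => [|a d IH]; first by rewrite !big_nil; lra.
rewrite !big_cons; apply: (le_trans (lerD (@termC a x y t ht) IH)); lra.
Qed.

Lemma polyD N (d : seq nat) k :
  polygon h N d k.+1%:R - polygon h N d k%:R =
  (count (fun di => h <= di + k)%N d)%:R / N%:R :> R.
Proof.
have hx : (k%:R : R) <= (k.+1%:R : R) <= (k.+1%:R : R).
  by rewrite ler_nat leqnSn lexx.
rewrite (@polyA N d k _ hx) -natr1; ring.
Qed.
End H.

Lemma nat_div_inj (R : realType) N a b : (0 < N)%N ->
  a%:R / N%:R = b%:R / N%:R :> R -> a = b.
Proof.
move=> N0 /(congr1 (fun z => z * N%:R)); rewrite !divfK ?pnatr_eq0 -?lt0n //.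
by move/eqP; rewrite eqr_nat => /eqP.
Qed.

Theorem mainTheorem1 (R : realType) (h N : nat) :
  (1 <= h)%N -> (1 <= N)%N ->
  (forall d : seq nat, size d = N -> all (fun di => di <= h)%N d ->
      inPN h N (@polygon R h N d)) /\
  (forall P : R -> R, inPN h N P ->
      exists d : seq nat,
        [/\ size d = N, all (fun di => di <= h)%N d,
            eqOn h P (@polygon R h N d) &
            forall d' : seq nat, size d' = N -> all (fun di => di <= h)%N d' ->
              eqOn h P (@polygon R h N d') -> perm_eq d d']).
Proof.
move=> h1 N1; have N0 : (0 : R) < N%:R by rewrite ltr0n.
split.
  move=> d hs hd; split; first exact: poly0.
  split; first by move=> x y t _ _ ht; exact: polyC.
  exists (fun k => (count (fun di => h <= di + k)%N d)%:R / N%:R) => k hk.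
  split; first by exists (Posz (count (fun di => h <= di + k)%N d)).
  split; last by move=> x hx; exact: polyA.
  rewrite divr_ge0 ?ler0n //= ler_pdivrMr // mul1r ler_nat -hs.
  exact: count_size.
move=> P [P0 [Pconv [s Hs]]].
pose c k := Num.truncn (s k * N%:R).
have sc : forall k, (k < h)%N -> (c k)%:R = s k * N%:R /\ (c k <= N)%N.
  move=> k hk; have [[z hz] [/andP[s0 s1] _]] := Hs k hk.
  have e : s k * N%:R = z%:~R by rewrite hz divfK // gt_eqF.
  case: z hz e => n hz e.
    have {}e : s k * N%:R = n%:R by rewrite e.
    rewrite /c e natrK; split => //; rewrite -(ler_nat R) -e.
    by rewrite -[X in _ <= X]mul1r ler_wpM2r // ltW.
  have : (0 : R) <= s k * N%:R by rewrite mulr_ge0 // ltW.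
  by rewrite e NegzE mulrNz oppr_ge0 pmulrn leNgt ltr0n.
have cmono : forall k, (k.+1 < h)%N -> (c k <= c k.+1)%N.
  move=> k hk.
  have hk0 : (k < h)%N by apply: ltn_trans hk.
  have [_ [_ A0]] := Hs k hk0.
  have [_ [_ A1]] := Hs k.+1 hk.
  have b1 : (k%:R : R) <= (k.+1%:R : R) <= (k.+1%:R : R).
    by rewrite ler_nat leqnSn lexx.
  have b2 : (k.+1%:R : R) <= (k.+2%:R : R) <= (k.+2%:R : R).
    by rewrite ler_nat leqnSn lexx.
  have e1' := A0 _ b1.
  have e2' := A1 _ b2.
  have hb : forall j, (j <= h)%N -> (0 : R) <= (j%:R : R) <= (h%:R : R).
    by move=> j hj; rewrite ler0n ler_nat.
  have cv := Pconv k%:R k.+2%:R (2^-1) (hb _ (ltnW hk0)) (hb _ hk).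
  have hmid : (2^-1 : R) * k%:R + (1 - 2^-1) * k.+2%:R = k.+1%:R.
    rewrite -[k.+2]addn2 -[k.+1]addn1 !natrD; by field.
  have cv' := cv ltac:(by rewrite invr_ge0 ler0n /= invf_le1 ?ler1n ?ltr0n).
  rewrite hmid in cv'.
  have : s k <= s k.+1.
    have d1 : (k.+1%:R : R) - k%:R = 1 by rewrite -natr1; ring.
    have d2 : (k.+2%:R : R) - k.+1%:R = 1 by rewrite -[(k.+2)%:R]natr1; ring.
    rewrite d1 mulr1 in e1'; rewrite d2 mulr1 in e2'.
    rewrite e2' e1' in cv'; lra.
  move=> H; rewrite -(ler_nat R) (proj1 (sc _ hk0)) (proj1 (sc _ hk)).
  by apply: ler_wpM2r => //; rewrite ler0n.
have cN : forall k, (k < h)%N -> (c k <= N)%N by move=> k hk; exact: (proj2 (sc _ hk)).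
have sk : forall k, (k < h)%N -> s k = (c k)%:R / N%:R.
  by move=> k hk; rewrite (proj1 (sc _ hk)) mulfK // gt_eqF.
set d := dd h N c.
have hcnt : forall k, (k < h)%N -> count (fun di => h <= di + k)%N d = c k.
  by move=> k hk; exact: (@dd_count h N c cmono cN k hk).
have Hint : forall k, (k <= h)%N -> P k%:R = polygon h N d k%:R.
  elim => [_|k IH hk]; first by rewrite mulr0n P0 poly0 //; exact: dd_all.
  have hk0 : (k < h)%N by [].
  have [_ [_ A]] := Hs k hk0.
  have b : (k%:R : R) <= (k.+1%:R : R) <= (k.+1%:R : R) by rewrite ler_nat leqnSn lexx.
  by rewrite (A _ b) IH ?(ltnW hk) // (@polyA R h N d k _ b) hcnt // sk.
exists d; split.
- exact: dd_size.
- exact: dd_all.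
- move=> x /andP[x0 xh].
  have [k [hk /andP[kx xk]]] : exists k, (k < h)%N /\ (k%:R : R) <= x <= (k.+1%:R : R).
    case: (ltnP (Num.truncn x) h.-1) => H.
      exists (Num.truncn x); split; first by lia.
      by rewrite truncn_le x0 /= ltW // truncnS_gt.
    exists h.-1; split; first by lia.
    rewrite prednK //= xh andbT.
    have := truncn_le x; rewrite x0 => H2; apply: (le_trans _ H2).
    by rewrite ler_nat.
  have [_ [_ A]] := Hs k hk.
  have b : k%:R <= x <= k.+1%:R by rewrite kx xk.
  by rewrite (A _ b) (@polyA R h N d k _ b) Hint ?(ltnW hk) // hcnt // sk.
- move=> d' hs' ha' heq.
  have cnteq : forall k, (k < h)%N -> count (fun di => h <= di + k)%N d' = c k.
    move=> k hk; apply: (@nat_div_inj R N) => //.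
    have hb : forall j, (j <= h)%N -> (0 : R) <= (j%:R : R) <= (h%:R : R).
      by move=> j hj; rewrite ler0n ler_nat.
    rewrite -polyD -!heq ?hb ?(ltnW hk) // !Hint ?(ltnW hk) // polyD hcnt //.
  apply: perm_of_G => t.
  case: (posnP t) => [->|t0].
    rewrite !(@eq_count _ _ predT) // !count_predT hs'; exact: dd_size.
  case: (leqP t h) => th.
    have e : (fun x => t <= x)%N =1 (fun di => h <= di + (h - t))%N by move=> y /=; lia.
    rewrite !(eq_count e) hcnt ?cnteq //; lia.
  rewrite !(@eq_in_count _ _ pred0) ?count_pred0 //.
    move=> y /(allP ha') /= hy; lia.
  move=> y /(allP (dd_all h N c)) /= hy; lia.
Qed.
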